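(* Let $U\ge 1$ users be indexed by $n\in\{1,\dots,U\}$. Fix a duty cycle $d\in(0,1)$, a maximum transmit power $P_t>0$, a noise variance $\sigma^2>0$, and for each user $n$ a harvested energy per unit time $E_n>0$, a channel gain $g_n>0$ and a time on air $T_{a,n}>0$ (the spreading factors, hence the $T_{a,n}$, are fixed). Let $\rho_{m,n}\in[0,1]$ be correlation factors with $\rho_{n,n}=1$. Suppose the packet collision time between users $n$ and $m$ is the worst-case one, $col_{n,m}=\min(T_{a,n},T_{a,m})$, independent of the energy-harvesting times. For powers $p=(p_n)$ define $$\gamma_n=\frac{p_n g_n}{\sum_{m\neq n}\frac{col_{n,m}}{T_{a,m}}\rho_{m,n}\,p_m g_m+\sigma^2},$$ and consider the problem of maximizing $\min_{n}\log(1+\gamma_n)$ over energy-harvesting times $\tau_{e,n}$ and powers $p_n$ subject to $0\le p_n\le P_t$, $0\le p_n\le \tau_{e,n}E_n/T_{a,n}$, and $0\le \tau_{e,n}\le \frac{1-d}{d}T_{a,n}$ for all $n$. Then the optimal energy-harvesting time of each user $n$ is $$\tau_{e,n}=\delta^{(2)}_{n,max}:=\min\!\left(\frac{P_t}{E_n},\frac{1-d}{d}\right)T_{a,n},$$ which is proportional to $T_{a,n}$; i.e. choosing $\tau_{e,n}=\delta^{(2)}_{n,max}$ for all $n$ (with a suitable power allocation) attains the maximum of the problem. Moreover, with this choice the available power after harvesting, $P_{h,n}=\tau_{e,n}E_n/T_{a,n}=\min\!\left(P_t,\frac{1-d}{d}E_n\right)$, is independent of $T_{a,n}$, so the choice of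 spreading factor has no effect on the energy-harvesting constraint of each user.
   Context: Model: LoRa users transmit uplink to a gateway under a ''harvest-then-transmit'' protocol. User $n$ first harvests energy for a time $\tau_{e,n}$, obtaining energy $\tau_{e,n}E_n$, then transmits a packet of duration (time on air) $T_{a,n}$; the available power is $P_{h,n}=\tau_{e,n}E_n/T_{a,n}$. The duty-cycle restriction limits the harvesting time to at most the off time $\frac{1-d}{d}T_{a,n}$. The transmit power $p_n$ is limited both by the maximum transmit power $P_t$ and by the available harvested power. The rate of user $n$ is $\log(1+\gamma_n)$ with $\gamma_n$ the SINR defined in the claim. *)

(* Defs.v *)
From mathcomp Require Import all_boot all_order all_algebra.
From mathcomp Require Import all_classical all_reals all_analysis.
Set Implicit Arguments. Unset Strict Implicit. Unset Printing Implicit Defensive.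
Import Order.TTheory GRing.Theory Num.Theory.
Local Open Scope ring_scope.

Section LoRa.
Variables (R : realType) (U : nat).

Definition col (Ta : 'I_U -> R) (n m : 'I_U) : R := Num.min (Ta n) (Ta m).

Definition sinr (Ta g : 'I_U -> R) (rho : 'I_U -> 'I_U -> R) (sigma2 : R)
  (p : 'I_U -> R) (n : 'I_U) : R :=
  p n * g n /
  (\sum_(m < U | m != n) (col Ta n m / Ta m) * rho m n * p m * g m + sigma2).

Definition rate Ta g rho sigma2 p n : R := ln (1 + sinr Ta g rho sigma2 p n).

(* min over the (nonempty) set of users; i0 is any user, the min is exact *)
Definition min_rate (i0 : 'I_U) Ta g rho sigma2 p : R :=
  \big[Num.min/ rate Ta g rho sigma2 p i0]_(n < U) rate Ta g rho sigma2 p n.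

Definition feasible (d Pt : R) (E Ta : 'I_U -> R) (tau p : 'I_U -> R) : Prop :=
  forall n : 'I_U,
    [/\ 0 <= p n, p n <= Pt, p n <= tau n * E n / Ta n,
        0 <= tau n & tau n <= (1 - d) / d * Ta n].

Definition delta2max (d Pt : R) (E Ta : 'I_U -> R) (n : 'I_U) : R :=
  Num.min (Pt / E n) ((1 - d) / d) * Ta n.

End LoRa.

(* Main.v *)
Require Import Defs.
From mathcomp Require Import all_boot all_order all_algebra.
From mathcomp Require Import all_classical all_reals all_analysis.
From mathcomp Require Import ring lra.
Import Order.TTheory GRing.Theory Num.Theory.
Import numFieldNormedType.Exports.
Local Open Scope ring_scope.
Lemma cont_big_min (T : topologicalType) (R : realType) (I : Type) (s : seq I)
  (r : I -> T -> R) (r0 : T -> R) :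
  continuous r0 -> (forall i, continuous (r i)) ->
  continuous (fun v => \big[Num.min/r0 v]_(i <- s) r i v).
Proof.
move=> c0 cr; elim: s => [|a s IH].
  by under eq_fun => v do rewrite big_nil.
under eq_fun => v do rewrite big_cons.
move=> x; exact: (@continuous_min R T (r a) (fun v => \big[Num.min/r0 v]_(i <- s) r i v) x (cr a x) (IH x)).
Qed.

Lemma cont_big_sum (T : topologicalType) (R : realType) (I : Type) (s : seq I)
  (P : pred I) (r : I -> T -> R) :
  (forall i, continuous (r i)) ->
  continuous (fun v => \sum_(i <- s | P i) r i v).
Proof.
move=> cr; elim: s => [|a s IH].
  under eq_fun => v do rewrite big_nil.
  by move=> x; exact: cst_continuous.
under eq_fun => v do rewrite big_cons.
case: (P a) => //.
move=> x; exact: (@continuousD R R^o T (r a) (fun v => \sum_(i <- s | P i) r i v) x (cr a x) (IH x)).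
Qed.

Theorem corollary1 (R : realType) (U : nat) (hU : (1 <= U)%N)
  (d Pt sigma2 : R) (E g Ta : 'I_U -> R) (rho : 'I_U -> 'I_U -> R) :
  0 < d -> d < 1 -> 0 < Pt -> 0 < sigma2 ->
  (forall n, 0 < E n) -> (forall n, 0 < g n) -> (forall n, 0 < Ta n) ->
  (forall m n, 0 <= rho m n <= 1) -> (forall n, rho n n = 1) ->
  (exists p : 'I_U -> R,
     feasible d Pt E Ta (delta2max d Pt E Ta) p /\
     forall tau' p' : 'I_U -> R, feasible d Pt E Ta tau' p' ->
       min_rate (Ordinal hU) Ta g rho sigma2 p'
         <= min_rate (Ordinal hU) Ta g rho sigma2 p) /\
  (forall n, delta2max d Pt E Ta n * E n / Ta n = Num.min Pt ((1 - d) / d * E n)).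
Proof.
move=> d0 d1 Pt0 s0 E0 g0 Ta0 rho01 rhonn.
set Pm := fun n => Num.min Pt ((1 - d) / d * E n).
have part2 : forall n, delta2max d Pt E Ta n * E n / Ta n = Pm n.
  move=> n; rewrite /delta2max /Pm.
  have Tn := Ta0 n; have En := E0 n.
  have -> : Num.min (Pt / E n) ((1 - d) / d) * Ta n * E n / Ta n =
            Num.min (Pt / E n) ((1 - d) / d) * E n.
    by field; rewrite lt0r_neq0.
  rewrite minr_pMl; last exact: ltW.
  congr Num.min; first by field; rewrite lt0r_neq0.
split; last exact: part2.
have Pm0 : forall n, 0 < Pm n.
  move=> n; rewrite /Pm lt_min Pt0 /=; apply: mulr_gt0 => //.
  by apply: divr_gt0; rewrite ?subr_gt0.
set cl := fun n (x : R) => Num.max 0 (Num.min x (Pm n)).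
have cl0 : forall n x, 0 <= cl n x by move=> n x; rewrite /cl le_max lexx.
have clP : forall n x, cl n x <= Pm n.
  by move=> n x; rewrite /cl ge_max (ltW (Pm0 n)) ge_min lexx orbT.
have clid : forall n x, 0 <= x -> x <= Pm n -> cl n x = x.
  move=> n x h1 h2; rewrite /cl (min_idPl h2); exact: max_idPr.
set P := fun v : 'rV[R]_U => fun n => cl n (v ord0 n).
have contP : forall n, continuous (fun v : 'rV[R]_U => P v n).
  move=> n v.
  have h1 : {for v, continuous (fun w : 'rV[R]_U => Num.min (w ord0 n) (Pm n))}.
    exact: (@continuous_min R _ (fun w : 'rV[R]_U => w ord0 n) (fun=> Pm n) v
             (@coord_continuous R 1 U ord0 n v) (@cst_continuous _ _ _ _)).
  exact: (@continuous_max R _ (fun=> 0) (fun w : 'rV[R]_U => Num.min (w ord0 n) (Pm n)) v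
             (@cst_continuous _ _ _ _) h1).
set F := fun v : 'rV[R]_U => min_rate (Ordinal hU) Ta g rho sigma2 (P v).
have denpos : forall (p : 'I_U -> R) n, (forall k, 0 <= p k) ->
   0 < \sum_(m < U | m != n) (Defs.col Ta n m / Ta m) * rho m n * p m * g m + sigma2.
  move=> p n hp; apply: ltr_pwDr => //; apply: sumr_ge0 => m _.
  apply: mulr_ge0; last exact: ltW.
  apply: mulr_ge0 => //; apply: mulr_ge0; last by case/andP: (rho01 m n).
  apply: divr_ge0; last exact: ltW.
  by rewrite /Defs.col le_min !ltW.
have sinr0 : forall (p : 'I_U -> R) n, (forall k, 0 <= p k) -> 0 <= sinr Ta g rho sigma2 p n.
  move=> p n hp; rewrite /sinr; apply: divr_ge0; last exact: ltW (denpos _ _ hp).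
  by apply: mulr_ge0 => //; exact: ltW.
have contR : forall n, continuous (fun v => rate Ta g rho sigma2 (P v) n).
  move=> n v; rewrite /rate.
  have hp : forall k, 0 <= P v k by move=> k; exact: cl0.
  have hc : {for v, continuous (fun v => 1 + sinr Ta g rho sigma2 (P v) n)}.
    apply: (@continuousD R R^o _ (fun=> 1) _ v (@cst_continuous _ _ _ _)).
    rewrite /sinr.
    apply: (@continuousM R _ (fun v => P v n * g n) _ v).
      exact: (@continuousM R _ (fun v => P v n) (fun=> g n) v (contP n v) (@cst_continuous _ _ _ _)).
    apply: (@continuousV R _ (fun v => \sum_(m < U | m != n) Defs.col Ta n m / Ta m * rho m n * P v m * g m + sigma2) v).
      by rewrite gt_eqF // denpos.
    apply: (@continuousD R R^o _ _ (fun=> sigma2) v _ (@cst_continuous _ _ _ _)).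
    apply: cont_big_sum => m w.
    apply: (@continuousM R _ _ (fun=> g m) w _ (@cst_continuous _ _ _ _)).
    exact: (@continuousM R _ (fun=> Defs.col Ta n m / Ta m * rho m n) _ w (@cst_continuous _ _ _ _) (contP m w)).
  have hl : {for (1 + sinr Ta g rho sigma2 (P v) n), continuous (@ln R)}.
    apply: continuous_ln; apply: ltr_pwDl => //; exact: sinr0.
  exact: (continuous_comp hc hl).
have contF : continuous F.
  rewrite /F /min_rate; apply: cont_big_min => //.
set A := [set v : 'rV[R]_U | forall i, `[0, Pm i]%classic (v ord0 i)]%classic.
have A0 : (A !=set0)%classic.
  exists 0 => i /=; rewrite mxE in_itv /= lexx; exact: ltW.
have cA : compact A.
  exact: (@rV_compact R U (fun i => `[0, Pm i]%classic) (fun i => @segment_compact R 0 (Pm i))).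
have cF : {within A, continuous F}%classic by exact: continuous_subspaceT.
have [c cA' cmax] := compact_EVT_max A0 cA cF.
exists (P c); split.
  move=> n; split.
  - exact: cl0.
  - by apply: le_trans (clP _ _) _; rewrite /Pm ge_min lexx.
  - by rewrite part2; exact: clP.
  - rewrite /delta2max; apply: mulr_ge0; last exact: ltW.
    by rewrite le_min (ltW (divr_gt0 _ _)) // (ltW (divr_gt0 _ _)) // subr_gt0.
  - by rewrite /delta2max ler_wpM2r ?ge_min ?lexx ?orbT // ltW.
move=> tau' p' fp.
set v := \row_n p' n.
have vA : v \in A.
  rewrite inE => i /=; rewrite mxE in_itv /=.
  case: (fp i) => h1 h2 h3 h4 h5; rewrite h1 /= /Pm le_min h2 /=.
  apply: le_trans h3 _; rewrite -mulrA.
  have -> : (1 - d) / d * E i = (1 - d) / d * Ta i * (E i / Ta i).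
    by field; rewrite !gt_eqF.
  apply: ler_wpM2r h5; apply: divr_ge0; exact: ltW.
have := cmax v vA; rewrite /F.
have -> : P v = p'.
  apply: funext => n; rewrite /P /v mxE; apply: clid.
  - by case: (fp n).
  - move: vA; rewrite inE => /(_ n); rewrite /v mxE /= in_itv /=; by case/andP.
done.
Qed.
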